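(* Let $n\ge1$ and let $\equiv$ be a lattice congruence of the weak order on $S_n$. For every equivalence class $X$ of $\equiv$, the projection $p(X)=\{p(\pi):\pi\in X\}$ is an equivalence class of the restriction $\equiv^*$. In particular, any two equivalence classes $X,Y$ of $\equiv$ satisfy either $p(X)=p(Y)$ or $p(X)\cap p(Y)=\emptyset$.
   Context: $S_n$ is the set of permutations of $[n]$ in one-line notation, with the weak order (inclusion of inversion sets), which is a lattice. A lattice congruence is an equivalence relation $\equiv$ on $S_n$ such that $\pi\equiv\pi'$ and $\rho\equiv\rho'$ imply $\pi\vee\rho\equiv\pi'\vee\rho'$ and $\pi\wedge\rho\equiv\pi'\wedge\rho'$. For $\pi\in S_n$, $p(\pi)\in S_{n-1}$ is obtained by deleting the value $n$. For $\sigma\in S_{n-1}$, $c_n(\sigma)\in S_n$ is $\sigma$ with $n$ appended at the end. The restriction $\equiv^*$ is the relation on $S_{n-1}$ given by $\sigma\equiv^*\tau$ iff $c_n(\sigma)\equiv c_n(\tau)$; it is a lattice congruence on $S_{n-1}$. *)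

(* Defs.v *)
From HB Require Import structures.
From mathcomp Require Import all_boot all_fingroup.
Set Implicit Arguments. Unset Strict Implicit. Unset Printing Implicit Defensive.

(* Permutations of [n] are represented as 'S_n (values 0..n-1 instead of 1..n;
   the value "n" becomes ord_max in 'S_n.+1).
   One-line notation of s : the sequence s(0) s(1) ... s(n-1). *)
Definition oneline n (s : 'S_n) : seq nat := [seq val (s i) | i <- enum 'I_n].

Definition inv_set n (s : 'S_n) : {set 'I_n * 'I_n} :=
  [set ab : 'I_n * 'I_n | (ab.1 < ab.2)%N && (((s^-1)%g ab.2) < ((s^-1)%g ab.1))%N].

Definition weak_le n (s t : 'S_n) : bool := inv_set s \subset inv_set t.

Definition is_join n (x y z : 'S_n) : bool :=
  [&& weak_le x z, weak_le y z & [forall w, weak_le x w ==> weak_le y w ==> weak_le z w]].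
Definition is_meet n (x y z : 'S_n) : bool :=
  [&& weak_le z x, weak_le z y & [forall w, weak_le w x ==> weak_le w y ==> weak_le w z]].

(* Lattice congruence of the weak order (joins/meets are expressed through
   their defining universal properties; they exist since the weak order is a lattice). *)
Definition lattice_congruence n (r : rel 'S_n) : Prop :=
  [/\ (forall x, r x x),
      (forall x y, r x y -> r y x),
      (forall x y z, r x y -> r y z -> r x z),
      (forall x x' y y' j j', r x x' -> r y y' -> is_join x y j -> is_join x' y' j' -> r j j')
    & (forall x x' y y' m m', r x x' -> r y y' -> is_meet x y m -> is_meet x' y' m' -> r m m')].

(* c_n : append the largest value at the end. *)
Definition cn n (s : 'S_n) : 'S_n.+1 := lift_perm ord_max ord_max s.

Definition restr n (r : rel 'S_n.+1) : rel 'S_n := fun s t => r (cn s) (cn t).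

Definition eq_class (T : finType) (r : rel T) (x : T) : {set T} := [set y | r x y].
Definition is_class (T : finType) (r : rel T) (X : {set T}) : Prop :=
  exists x, X = eq_class r x.

Definition pimage n (X : {set 'S_n.+1}) : {set 'S_n} :=
  [set s | [exists pi in X, oneline s == filter (predC1 n) (oneline pi)]].

(* Main.v *)
Require Import Defs.
From HB Require Import structures.
From mathcomp Require Import all_boot all_fingroup.
Set Implicit Arguments. Unset Strict Implicit. Unset Printing Implicit Defensive.

Section Gen.
Variable n : nat.
Implicit Types s t w : 'S_n.

Definition pos s : 'S_n := (s^-1)%g.

Lemma inv_setE s a b : ((a, b) \in inv_set s) = (a < b) && (pos s b < pos s a).
Proof. by rewrite /inv_set inE. Qed.

Lemma inv_set_lt s ab : ab \in inv_set s -> ab.1 < ab.2.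
Proof. by case: ab => a b; rewrite inv_setE => /andP[]. Qed.

Section Mk.
Variable lt : rel 'I_n.
Hypothesis lt_irr : irreflexive lt.
Hypothesis lt_tr : transitive lt.
Hypothesis lt_tot : forall a b, a != b -> lt a b || lt b a.

Definition rk (a : 'I_n) : nat := #|[set b | lt b a]|.

Lemma rk_lt a b : lt a b -> rk a < rk b.
Proof.
move=> ab; apply: proper_card; apply/properP; split.
  by apply/subsetP => c; rewrite !inE => ca; apply: lt_tr ab.
by exists a; rewrite !inE ?ab ?lt_irr.
Qed.

Lemma rk_bound a : rk a < n.
Proof.
rewrite /rk -[n in _ < n]card_ord; apply: proper_card; apply/properP; split.
  by apply/subsetP.
by exists a; rewrite ?inE ?lt_irr.
Qed.

Lemma rk_ltE a b : (rk a < rk b) = lt a b.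
Proof.
apply/idP/idP; last exact: rk_lt.
move=> h; case: (eqVneq a b) => [e|ne]; first by rewrite e ltnn in h.
case/orP: (lt_tot ne) => // ba.
by have := rk_lt ba; rewrite ltnNge (ltnW h).
Qed.

Definition rko a : 'I_n := Ordinal (rk_bound a).

Lemma rko_inj : injective rko.
Proof.
move=> a b /(congr1 val) /= e; apply/eqP; apply: contraT => ne.
case/orP: (lt_tot ne) => /rk_lt; by rewrite e ltnn.
Qed.

Definition mkpos : 'S_n := perm rko_inj.
Definition mkperm : 'S_n := (mkpos^-1)%g.

Lemma mkpermE a b : (pos mkperm a < pos mkperm b) = lt a b.
Proof. by rewrite /pos /mkperm invgK !permE /= rk_ltE. Qed.
End Mk.

Lemma weak_refl s : weak_le s s.
Proof. exact: subxx. Qed.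
Lemma weak_trans s t w : weak_le s t -> weak_le t w -> weak_le s w.
Proof. exact: subset_trans. Qed.

Lemma card_ltord (k : 'I_n) : #|[set j : 'I_n | j < k]| = k.
Proof.
have le : k <= n by apply: ltnW.
have -> : [set j : 'I_n | j < k] = widen_ord le @: [set: 'I_k].
  apply/setP => j; rewrite inE; apply/idP/imsetP.
    by move=> jk; exists (Ordinal jk); rewrite ?inE //; apply: val_inj.
  by case=> i _ ->; rewrite /= ltn_ord.
by rewrite card_imset ?cardsT ?card_ord //; by move=> x y /(congr1 val) /= /val_inj.
Qed.

Lemma rank_perm (q : 'S_n) a : val (q a) = #|[set b | q b < q a]|.
Proof.
have -> : [set b | q b < q a] = q @^-1: [set j : 'I_n | j < q a].
  by apply/setP => b; rewrite !inE.
by rewrite card_preimset ?card_ltord //; apply: perm_inj.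
Qed.

Lemma lt_neg (x y : nat) : x != y -> (x < y) = ~~ (y < x).
Proof. by case: ltngtP. Qed.

Lemma inv_set_inj s t : inv_set s = inv_set t -> s = t.
Proof.
move=> e.
have h : forall a b, (pos s a < pos s b) = (pos t a < pos t b).
  move=> a b; case: (ltngtP a b) => [ab|ba|/val_inj ->]; last by rewrite !ltnn.
  - have : ((a, b) \in inv_set s) = ((a, b) \in inv_set t) by rewrite e.
    rewrite !inv_setE ab /= => eab.
    have nes : (pos s a : nat) != pos s b.
      by rewrite val_eqE (inj_eq perm_inj); apply/eqP=> ee; rewrite ee ltnn in ab.
    have net : (pos t a : nat) != pos t b.
      by rewrite val_eqE (inj_eq perm_inj); apply/eqP=> ee; rewrite ee ltnn in ab.
    by rewrite (lt_neg nes) (lt_neg net) eab.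
  - have : ((b, a) \in inv_set s) = ((b, a) \in inv_set t) by rewrite e.
    by rewrite !inv_setE ba.
have hp : pos s = pos t.
  apply/permP => a; apply: val_inj; rewrite (rank_perm (pos s)) (rank_perm (pos t)); apply: eq_card => b.
  by rewrite !inE h.
by move: (congr1 (fun q : 'S_n => (q^-1)%g) hp); rewrite /pos !invgK.
Qed.

Lemma pos_neg s a b : a != b -> (pos s a < pos s b) = ~~ (pos s b < pos s a).
Proof.
move=> ne; apply: lt_neg; rewrite val_eqE (inj_eq perm_inj); exact: ne.
Qed.

Section Rev.
Variable s : 'S_n.
Definition revlt (a b : 'I_n) := pos s b < pos s a.
Lemma revlt_irr : irreflexive revlt. Proof. by move=> a; rewrite /revlt ltnn. Qed.
Lemma revlt_tr : transitive revlt. Proof. by move=> b a c; rewrite /revlt => h1 h2; apply: ltn_trans h2 h1. Qed.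
Lemma revlt_tot a b : a != b -> revlt a b || revlt b a.
Proof. by move=> ne; rewrite /revlt (pos_neg s (a:=b) (b:=a)) ?orNb // eq_sym. Qed.
Definition revp : 'S_n := mkperm revlt_irr revlt_tr revlt_tot.
Lemma pos_rev a b : (pos revp a < pos revp b) = (pos s b < pos s a).
Proof. by rewrite mkpermE. Qed.
End Rev.

Lemma inv_rev s a b : ((a, b) \in inv_set (revp s)) = (a < b) && (pos s a < pos s b).
Proof. by rewrite inv_setE pos_rev. Qed.

Lemma rev_rev s : revp (revp s) = s.
Proof.
apply: inv_set_inj; apply/setP => -[a b]; rewrite inv_setE pos_rev pos_rev inv_setE //.
Qed.

Lemma weak_rev s t : weak_le (revp s) (revp t) = weak_le t s.
Proof.
apply/subsetP/subsetP => h [a b].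
  rewrite !inv_setE => /andP[ab lt]; rewrite ab /=.
  have ne : a != b by apply/eqP => e; rewrite e ltnn in ab.
  apply: contraTT lt => nl; have := h (a, b).
  rewrite !inv_rev ab (pos_neg s ne) nl (pos_neg t ne) /=.
  by move=> /(_ isT).
rewrite !inv_rev => /andP[ab lt]; rewrite ab /=.
have ne : a != b by apply/eqP => e; rewrite e ltnn in ab.
move: lt; rewrite (pos_neg s ne) (pos_neg t ne); apply: contraNN => nl.
have := h (a, b); rewrite !inv_setE ab nl /=; by move=> /(_ isT).
Qed.

Lemma connect_mono (T : finType) (e : rel T) (f : T -> nat) :
  (forall x y, e x y -> f x <= f y) -> forall x y, connect e x y -> f x <= f y.
Proof.
move=> h x y /connectP [p]; elim: p x => [|z p IH] x /=; first by move=> _ ->.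
by case/andP=> exz pz ey; apply: leq_trans (h _ _ exz) (IH _ pz ey).
Qed.

Section Meet.
Variables s t : 'S_n.
Definition E (u v : 'I_n) := (u < v) && ((pos s u < pos s v) || (pos t u < pos t v)).
Definition C := connect E.

Lemma C_le (u v : 'I_n) : C u v -> u <= v.
Proof. apply: (connect_mono (f := fun x : 'I_n => val x)) => x y /andP[h _]; exact: ltnW. Qed.

Lemma E_cotr (x y z : 'I_n) : x < y -> y < z -> E x z -> E x y || E y z.
Proof.
move=> xy yz /andP[xz h]; rewrite /E xy yz /=.
have nxy : x != y by apply/eqP => e; rewrite e ltnn in xy.
have nyz : y != z by apply/eqP => e; rewrite e ltnn in yz.
case/orP: h => h.
  case: (ltnP (pos s x) (pos s y)) => h1; first by rewrite orTb.
  have : pos s y < pos s x by rewrite ltn_neqAle h1 andbT val_eqE (inj_eq perm_inj) eq_sym.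
  by move=> h2; rewrite (ltn_trans h2 h) !orbT.
case: (ltnP (pos t x) (pos t y)) => h1; first by rewrite orbT.
have : pos t y < pos t x by rewrite ltn_neqAle h1 andbT val_eqE (inj_eq perm_inj) eq_sym.
by move=> h2; rewrite (ltn_trans h2 h) !orbT.
Qed.

Lemma C_cotr (x y z : 'I_n) : x < y -> y < z -> C x z -> C x y || C y z.
Proof.
move=> xy yz /connectP [p]; elim: p x xy => [|u p IH] x xy /=.
  by move=> _ e; move: yz; rewrite e => yx; rewrite ltnNge (ltnW yx) in xy.
case/andP=> exu pu ez.
case: (ltngtP y u) => [yu|uy|yu].
- case/orP: (E_cotr xy yu exu) => h; first by rewrite /C (connect1 h).
  apply/orP; right; apply: connect_trans (connect1 h) _.
  by apply/connectP; exists p.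
- case/orP: (IH u uy pu ez) => h; last by rewrite h orbT.
  by rewrite /C (connect_trans (connect1 exu) h).
- have -> : y = u by apply: val_inj.
  by rewrite /C (connect1 exu).
Qed.

Definition bef (u v : 'I_n) := if u < v then C u v else (v < u) && ~~ C v u.

Lemma bef_irr : irreflexive bef.
Proof. by move=> u; rewrite /bef ltnn. Qed.

Lemma bef_tot u v : u != v -> bef u v || bef v u.
Proof.
move=> ne; rewrite /bef; case: (ltngtP u v) => [uv|vu|e].
- by case: (C u v).
- by case: (C v u).
- by rewrite (val_inj e) eqxx in ne.
Qed.

Lemma C_trans : transitive C.
Proof. move=> y x z; exact: connect_trans. Qed.

Lemma bef_tr : transitive bef.
Proof.
move=> b a c; rewrite /bef.
case: (ltngtP a b) => [ab|ba|_]; last by case/andP.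
- case: (ltngtP b c) => [bc|cb|_]; last by move=> _ /andP[].
  + move=> Cab Cbc; by rewrite (ltn_trans ab bc) (C_trans Cab Cbc).
  + move=> Cab /andP[_ nCcb]; case: (ltngtP a c) => [ac|ca|/val_inj eac].
    * by case/orP: (C_cotr ac cb Cab) => // h; rewrite h in nCcb.
    * apply/andP; split => //; apply/negP => Cca.
      by rewrite (C_trans Cca Cab) in nCcb.
    * by move: nCcb; rewrite -eac Cab.
- case/andP=> _ nCba; case: (ltngtP b c) => [bc|cb|_]; last by case/andP.
  + move=> Cbc; case: (ltngtP a c) => [ac|ca|/val_inj eac].
    * by case/orP: (C_cotr ba ac Cbc) => // h; rewrite h in nCba.
    * apply/andP; split => //; apply/negP => Cca.
      by rewrite (C_trans Cbc Cca) in nCba.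
    * by move: nCba; rewrite eac Cbc.
  + case/andP=> _ nCcb; have ca := ltn_trans cb ba.
    rewrite ltnNge (ltnW ca) /= ca /=; apply/negP => Cca.
    by case/orP: (C_cotr cb ba Cca) => h; [rewrite h in nCcb | rewrite h in nCba].
Qed.

Definition meet := mkperm bef_irr bef_tr bef_tot.

Lemma inv_meet a b : ((a, b) \in inv_set meet) = (a < b) && ~~ C a b.
Proof.
by rewrite inv_setE mkpermE /bef; case: (ltngtP a b).
Qed.

Lemma is_meet_meet : is_meet s t meet.
Proof.
apply/and3P; split.
- apply/subsetP => -[a b]; rewrite inv_meet inv_setE => /andP[ab nC].
  rewrite ab /=; apply: contraNT nC => h.
  have ne : a != b by apply/eqP => e; rewrite e ltnn in ab.
  apply: connect1; by rewrite /E ab (pos_neg s ne) h.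
- apply/subsetP => -[a b]; rewrite inv_meet inv_setE => /andP[ab nC].
  rewrite ab /=; apply: contraNT nC => h.
  have ne : a != b by apply/eqP => e; rewrite e ltnn in ab.
  apply: connect1; by rewrite /E ab (pos_neg t ne) h orbT.
- apply/forallP => w; apply/implyP => ws; apply/implyP => wt.
  have mono : forall u v, C u v -> pos w u <= pos w v.
    apply: (connect_mono (f := fun x => val (pos w x))) => u v /andP[uv h].
    rewrite leqNgt; apply/negP => wvu.
    have : (u, v) \in inv_set w by rewrite inv_setE uv.
    move=> inw; have := subsetP ws _ inw; have := subsetP wt _ inw.
    rewrite !inv_setE uv /= => ht hs.
    by case/orP: h => h; [rewrite ltnNge (ltnW hs) in h | rewrite ltnNge (ltnW ht) in h].
  apply/subsetP => -[a b]; rewrite inv_setE inv_meet => /andP[ab h]; rewrite ab /=.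
  by apply/negP => /mono; rewrite leqNgt h.
Qed.
End Meet.

Lemma meet_ex s t : exists m, is_meet s t m.
Proof. by exists (meet s t); apply: is_meet_meet. Qed.

Lemma join_ex s t : exists j, is_join s t j.
Proof.
exists (revp (meet (revp s) (revp t))).
have /and3P[m1 m2 /forallP m3] := is_meet_meet (revp s) (revp t).
apply/and3P; split.
- by rewrite -[s in weak_le s _]rev_rev weak_rev.
- by rewrite -[t in weak_le t _]rev_rev weak_rev.
- apply/forallP => w; apply/implyP => sw; apply/implyP => tw.
  rewrite -[w in weak_le _ w]rev_rev weak_rev.
  by have /implyP/(_ _)/implyP := m3 (revp w); apply; rewrite weak_rev.
Qed.

End Gen.

Section Spec.
Variable m : nat.
Local Notation N := (@ord_max m).
Definition wl (a : 'I_m) : 'I_m.+1 := lift ord_max a.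
Arguments wl : simpl never.

Lemma wl_val a : val (wl a) = a. Proof. exact: lift_max. Qed.
Lemma wl_inj : injective wl. Proof. exact: lift_inj. Qed.
Lemma wl_neq a : (wl a == N) = false.
Proof. by apply/negbTE; rewrite eq_sym; apply: neq_lift. Qed.
Lemma wl_lt a b : (wl a < wl b) = (a < b). Proof. by rewrite !wl_val. Qed.
Lemma wl_ltN a : wl a < N. Proof. by rewrite wl_val ltn_ord. Qed.
Lemma N_lt_wl a : (N < wl a) = false. Proof. by rewrite ltnNge ltnW // wl_ltN. Qed.

Lemma unliftW (x : 'I_m.+1) : (exists a, x = wl a) \/ x = N.
Proof. by case: (unliftP N x) => [a ->|->]; [left; exists a|right]. Qed.

Definition Rinv (p : 'S_m.+1) : {set 'I_m * 'I_m} :=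
  [set ab | (wl ab.1, wl ab.2) \in inv_set p].
Definition Lset (A : {set 'I_m * 'I_m}) : {set 'I_m.+1 * 'I_m.+1} :=
  [set (wl ab.1, wl ab.2) | ab in A].
Definition Nset : {set 'I_m.+1 * 'I_m.+1} := [set ab | (ab.1 != N) && (ab.2 == N)].

Lemma inL A a b : ((wl a, wl b) \in Lset A) = ((a, b) \in A).
Proof.
apply/imsetP/idP => [[[c d] cd e]|h].
  have e1 := wl_inj (congr1 fst e); have e2 := wl_inj (congr1 snd e).
  by rewrite e1 e2.
by exists (a, b).
Qed.
Lemma inL_N1 A x : ((x, N) \in Lset A) = false.
Proof. by apply/imsetP => -[[c d] _ e]; move: (congr1 snd e) => /= /eqP; rewrite eq_sym wl_neq. Qed.
Lemma inL_N2 A x : ((N, x) \in Lset A) = false.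
Proof. by apply/imsetP => -[[c d] _ e]; move: (congr1 fst e) => /= /eqP; rewrite eq_sym wl_neq. Qed.

Lemma inRinv p a b : ((a, b) \in Rinv p) = ((wl a, wl b) \in inv_set p).
Proof. by rewrite inE. Qed.

Lemma Rinv_L A : [set ab | (wl ab.1, wl ab.2) \in Lset A] = A.
Proof. by apply/setP => -[a b]; rewrite inE inL. Qed.
Lemma Rinv_LN A : [set ab | (wl ab.1, wl ab.2) \in Lset A :|: Nset] = A.
Proof. by apply/setP => -[a b]; rewrite !inE inL /= !wl_neq andbF orbF. Qed.

Lemma Rinv_mono p q : weak_le p q -> Rinv p \subset Rinv q.
Proof. by move=> /subsetP h; apply/subsetP => -[a b]; rewrite !inRinv => /h. Qed.

Lemma inv_decomp p : inv_set p \subset Lset (Rinv p) :|: Nset.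
Proof.
apply/subsetP => -[x y] h; have := inv_set_lt h => /= xy.
rewrite inE; case: (unliftW x) => [[a ex]|ex]; case: (unliftW y) => [[b ey]|ey].
- by rewrite ex ey inL inRinv -ex -ey h.
- by rewrite ex ey !inE eqxx wl_neq orbT.
- by move: xy; rewrite ex ey wl_val ltnNge /= ltnW // ltn_ord.
- by move: xy; rewrite ex ey ltnn.
Qed.

Lemma L_sub p : Lset (Rinv p) \subset inv_set p.
Proof. by apply/subsetP => xy /imsetP [[a b] h ->]; rewrite -inRinv. Qed.

Lemma Lset_mono (A B : {set 'I_m * 'I_m}) : A \subset B -> Lset A \subset Lset B.
Proof. exact: imsetS. Qed.

Lemma pos_cn s a : pos (cn s) (wl a) = wl (pos s a).
Proof. by rewrite /pos /cn lift_permV lift_perm_lift. Qed.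
Lemma pos_cnN s : pos (cn s) N = N.
Proof. by rewrite /pos /cn lift_permV lift_perm_id. Qed.

Lemma inv_cn s : inv_set (cn s) = Lset (inv_set s).
Proof.
apply/setP => -[x y]; case: (unliftW x) => [[a ->]|->]; case: (unliftW y) => [[b ->]|->].
- by rewrite inL !inv_setE !pos_cn !wl_lt.
- by rewrite inL_N1 inv_setE pos_cnN pos_cn N_lt_wl andbF.
- by rewrite inL_N2 inv_setE N_lt_wl.
- by rewrite inL_N2 inv_setE ltnn.
Qed.

(* T s : n first *)
Section T.
Variable s : 'S_m.
Definition tk (v : 'I_m.+1) : nat := if unlift N v is Some a then (pos s a).+1 else 0.
Lemma tk_wl a : tk (wl a) = (pos s a).+1. Proof. by rewrite /tk liftK. Qed.
Lemma tk_N : tk N = 0. Proof. by rewrite /tk unlift_none. Qed.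
Definition tlt (a b : 'I_m.+1) := tk a < tk b.
Lemma tlt_irr : irreflexive tlt. Proof. by move=> a; rewrite /tlt ltnn. Qed.
Lemma tlt_tr : transitive tlt. Proof. by move=> b a c; rewrite /tlt; apply: ltn_trans. Qed.
Lemma tk_inj : injective tk.
Proof.
move=> x y; case: (unliftW x) => [[a ->]|->]; case: (unliftW y) => [[b ->]|->];
  rewrite ?tk_wl ?tk_N //.
by move=> [] /val_inj /perm_inj ->.
Qed.
Lemma tlt_tot a b : a != b -> tlt a b || tlt b a.
Proof.
move=> ne; rewrite /tlt; case: ltngtP => // /tk_inj e; by rewrite e eqxx in ne.
Qed.
Definition Tp : 'S_m.+1 := mkperm tlt_irr tlt_tr tlt_tot.

Lemma inv_T : inv_set Tp = Lset (inv_set s) :|: Nset.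
Proof.
apply/setP => -[x y]; rewrite in_setU inv_setE mkpermE /tlt.
case: (unliftW x) => [[a ->]|->]; case: (unliftW y) => [[b ->]|->].
- by rewrite inL !tk_wl ltnS wl_lt !in_set /= !wl_neq andbF orbF.
- by rewrite inL_N1 tk_wl tk_N wl_ltN /Nset in_set /= wl_neq eqxx.
- by rewrite inL_N2 /Nset in_set /= eqxx N_lt_wl.
- by rewrite inL_N2 /Nset in_set /= eqxx ltnn.
Qed.
End T.

Lemma inv_set1 n : inv_set (1%g : 'S_n) = set0.
Proof.
apply/setP => -[a b]; rewrite inv_setE inE /pos invg1 !perm1.
by case: ltngtP.
Qed.

Definition Nperm := Tp (1%g : 'S_m).
Lemma inv_Nperm : inv_set Nperm = Nset.
Proof.
rewrite /Nperm inv_T inv_set1; apply/setP => x; rewrite inE.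
by rewrite (_ : Lset set0 = set0) ?inE //; apply: imset0.
Qed.

Definition Mperm := cn (revp (1%g : 'S_m)).
Lemma inv_M : inv_set Mperm = Lset [set ab : 'I_m * 'I_m | ab.1 < ab.2].
Proof.
rewrite /Mperm inv_cn; congr Lset; apply/setP => -[a b].
by rewrite inv_rev inE /pos invg1 !perm1 andbb.
Qed.

End Spec.

Section P.
Variable m : nat.
Local Notation N := (@ord_max m).

Section Ex.
Variable p : 'S_m.+1.
Definition plt (a b : 'I_m) := pos p (wl a) < pos p (wl b).
Lemma plt_irr : irreflexive plt. Proof. by move=> a; rewrite /plt ltnn. Qed.
Lemma plt_tr : transitive plt. Proof. by move=> b a c; rewrite /plt; apply: ltn_trans. Qed.
Lemma plt_tot a b : a != b -> plt a b || plt b a.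
Proof.
move=> ne; rewrite /plt; case: ltngtP => // /val_inj /perm_inj /(@wl_inj m) e.
by rewrite e eqxx in ne.
Qed.
Definition pp : 'S_m := mkperm plt_irr plt_tr plt_tot.
Lemma inv_pp : inv_set pp = Rinv p.
Proof. by apply/setP => -[a b]; rewrite inRinv !inv_setE mkpermE /plt wl_lt. Qed.
End Ex.

Lemma exists_p p : exists s : 'S_m, inv_set s = Rinv p.
Proof. by exists (pp p); apply: inv_pp. Qed.

Lemma agree (s : 'S_m) (p : 'S_m.+1) : inv_set s = Rinv p ->
  forall a b : 'I_m, (pos s a < pos s b) = (pos p (wl a) < pos p (wl b)).
Proof.
move=> e a b.
have E2 : forall x y, ((x, y) \in inv_set s) = ((wl x, wl y) \in inv_set p).
  by move=> x y; rewrite e inRinv.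
case: (ltngtP a b) => [ab|ba|/val_inj ->]; last by rewrite !ltnn.
- have ne : a != b by apply/eqP => q; rewrite q ltnn in ab.
  have ne' : wl a != wl b by rewrite (inj_eq (@wl_inj m)).
  have := E2 a b; rewrite !inv_setE ab wl_lt ab /= => h.
  by rewrite (pos_neg s ne) (pos_neg p ne') h.
- by have := E2 b a; rewrite !inv_setE ba wl_lt ba.
Qed.

Lemma oneline_nth n (s : 'S_n) (i : 'I_n) : nth 0 (oneline s) i = val (s i).
Proof. by rewrite /oneline (nth_map i) ?size_enum_ord ?ltn_ord // nth_ord_enum. Qed.

Lemma oneline_inj n (s t : 'S_n) : oneline s = oneline t -> s = t.
Proof.
move=> h; apply/permP => i; apply: val_inj.
by rewrite -!oneline_nth h.
Qed.

Lemma oneline_filter (s : 'S_m) (p : 'S_m.+1) : inv_set s = Rinv p ->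
  oneline s = filter (predC1 m) (oneline p).
Proof.
move=> e; have ag := agree e.
pose key (k : nat) : nat := val (pos p (inord k)).
pose lt := fun x y => key x < key y.
have keyp : forall i : 'I_m.+1, key (val (p i)) = i.
  by move=> i; rewrite /key inord_val /pos permK.
have keys : forall i : 'I_m, key (val (s i)) = val (pos p (wl (s i))).
  move=> i; rewrite /key; congr (val (pos p _)); apply: val_inj.
  have hlt : val (s i) < m.+1 by rewrite ltnS ltnW // ltn_ord.
  by rewrite wl_val /= (inordK hlt).
have ordsort : forall n, sorted (fun i j : 'I_n => val i < val j) (enum 'I_n).
  by move=> n; have := iota_ltn_sorted 0 n; rewrite -val_enum_ord sorted_map.
apply: (irr_sorted_eq (leT := lt)).
- by move=> y x z; apply: ltn_trans.
- by move=> x; rewrite /lt ltnn.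
- rewrite /oneline sorted_map; apply: sub_sorted (ordsort m) => i j ij.
  rewrite /relpre /lt /= !keys -ag /pos !permK; exact: ij.
- apply: sorted_filter; first by move=> y x z; apply: ltn_trans.
  rewrite /oneline sorted_map; apply: sub_sorted (ordsort m.+1) => i j ij.
  by rewrite /relpre /lt /= !keyp.
- move=> k; rewrite mem_filter /oneline.
  have -> : (k \in [seq val (s i) | i <- enum 'I_m]) = (k < m).
    apply/mapP/idP => [[i _ ->]|km]; first exact: ltn_ord.
    by exists ((s^-1)%g (Ordinal km)); rewrite ?mem_enum // permKV.
  have -> : (k \in [seq val (p i) | i <- enum 'I_m.+1]) = (k < m.+1).
    apply/mapP/idP => [[i _ ->]|km]; first exact: ltn_ord.
    by exists ((p^-1)%g (Ordinal km)); rewrite ?mem_enum // permKV.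
  by rewrite /= ltnS ltn_neqAle andbC.
Qed.

End P.
Lemma is_meet_self n (x y : 'S_n) : weak_le x y -> is_meet x y x.
Proof.
move=> xy; apply/and3P; split => //; first exact: weak_refl.
by apply/forallP => w; apply/implyP => wx; apply/implyP.
Qed.

Lemma is_join_self n (x y : 'S_n) : weak_le y x -> is_join x y x.
Proof.
move=> yx; apply/and3P; split => //; first exact: weak_refl.
by apply/forallP => w; apply/implyP => wx; apply/implyP.
Qed.

Section Main.
Variable m : nat.

Lemma Rinv_cn (s : 'S_m) : Rinv (cn s) = inv_set s.
Proof. by rewrite /Rinv inv_cn Rinv_L. Qed.
Lemma Rinv_T (s : 'S_m) : Rinv (Tp s) = inv_set s.
Proof. by rewrite /Rinv inv_T Rinv_LN. Qed.

Lemma meetM (p : 'S_m.+1) (s : 'S_m) : inv_set s = Rinv p -> is_meet p (Mperm m) (cn s).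
Proof.
move=> e; apply/and3P; split.
- by rewrite /weak_le inv_cn e L_sub.
- rewrite /weak_le inv_cn inv_M; apply: Lset_mono; apply/subsetP => ab h.
  by rewrite inE; apply: inv_set_lt h.
- apply/forallP => w; apply/implyP => /subsetP wp; apply/implyP => /subsetP wM.
  apply/subsetP => xy h; have := wM _ h; rewrite inv_M => /imsetP [[a b] _ exy].
  rewrite inv_cn exy inL e inRinv -exy; exact: wp.
Qed.

Lemma joinN (p : 'S_m.+1) (s : 'S_m) : inv_set s = Rinv p -> is_join p (Nperm m) (Tp s).
Proof.
move=> e; apply/and3P; split.
- by rewrite /weak_le inv_T e inv_decomp.
- by rewrite /weak_le inv_T inv_Nperm subsetUr.
- apply/forallP => w; apply/implyP => pw; apply/implyP => Nw.
  rewrite /weak_le inv_T subUset; apply/andP; split.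
    by rewrite e; apply: subset_trans (L_sub p) pw.
  by rewrite -inv_Nperm.
Qed.

Variable r : rel 'S_m.+1.
Hypothesis rr : forall x, r x x.
Hypothesis rs : forall x y, r x y -> r y x.
Hypothesis rt : forall x y z, r x y -> r y z -> r x z.
Hypothesis rj : forall x x' y y' j j', r x x' -> r y y' -> is_join x y j -> is_join x' y' j' -> r j j'.
Hypothesis rm : forall x x' y y' m m', r x x' -> r y y' -> is_meet x y m -> is_meet x' y' m' -> r m m'.

Lemma key_lemma (x : 'S_m.+1) (s0 : 'S_m) : inv_set s0 = Rinv x ->
  forall s, (s \in pimage (eq_class r x)) = r (cn s0) (cn s).
Proof.
move=> e0 s; apply/idP/idP.
- rewrite inE => /existsP [p /andP[]]; rewrite inE => rxp /eqP hs.
  have [s' es'] := exists_p p.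
  have ss' : s = s' by apply: oneline_inj; rewrite hs (oneline_filter es').
  rewrite ss'.
  apply: (rm (rxp) (rr (Mperm m)) (meetM e0) (meetM es')).
- move=> h.
  have [mu hmu] := meet_ex (cn s) (cn s0).
  have rsmu : r (cn s) mu.
    by apply: (rm (rr (cn s)) (rs h) (is_meet_self (weak_refl _)) hmu).
  have rmut : r mu (cn s0) by apply: rt (rs rsmu) (rs h).
  have [rho erho] := exists_p mu.
  have rT : r (Tp rho) (Tp s0).
    apply: (rj rmut (rr (Nperm m)) (joinN erho)).
    by apply: joinN; rewrite Rinv_cn.
  have [p1 hp1] := meet_ex x (Tp rho).
  have hxT : weak_le x (Tp s0) by rewrite /weak_le inv_T e0 inv_decomp.
  have r1 : r p1 x by apply: (rm (rr x) rT hp1 (is_meet_self hxT)).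
  have /and3P [hmu1 hmu2 _] := hmu.
  have /and3P [muT _ _] := joinN erho.
  have ctx : weak_le (cn s0) x by rewrite /weak_le inv_cn e0 L_sub.
  have mup1 : weak_le mu p1.
    have /and3P [_ _ /forallP h1] := hp1.
    by have /implyP/(_ (weak_trans hmu2 ctx))/implyP/(_ muT) := h1 mu.
  have e1 : Rinv p1 = inv_set rho.
    apply/eqP; rewrite eqEsubset; apply/andP; split.
      have /and3P [_ p1T _] := hp1.
      by rewrite -(Rinv_T rho); apply: Rinv_mono.
    by rewrite erho; apply: Rinv_mono.
  have [p2 hp2] := join_ex p1 (cn s).
  have r2 : r p2 p1 by apply: (rj (rr p1) rsmu hp2 (is_join_self mup1)).
  have e2 : Rinv p2 = inv_set s.
    apply/eqP; rewrite eqEsubset; apply/andP; split; last first.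
      have /and3P [_ sp2 _] := hp2.
      by rewrite -(Rinv_cn s); apply: Rinv_mono.
    have cT : weak_le (cn s) (Tp s) by rewrite /weak_le inv_cn inv_T subsetUl.
    have rhos : inv_set rho \subset inv_set s.
      by rewrite erho -(Rinv_cn s); apply: Rinv_mono.
    have p1T : weak_le p1 (Tp s).
      rewrite /weak_le inv_T; apply: subset_trans (inv_decomp p1) _.
      by rewrite e1; apply: setSU; apply: Lset_mono.
    have /and3P [_ _ /forallP h2] := hp2.
    have := h2 (Tp s) => /implyP/(_ p1T)/implyP/(_ cT) p2T.
    by rewrite -(Rinv_T s); apply: Rinv_mono.
  rewrite inE; apply/existsP; exists p2; rewrite inE.
  apply/andP; split; first by apply: rs; apply: rt r2 r1.
  by rewrite (oneline_filter (esym e2)).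
Qed.
End Main.
Unset Implicit Arguments.
Theorem mainTheorem4 (m : nat) (r : rel 'S_m.+1) :
  lattice_congruence r ->
  (forall X : {set 'S_m.+1}, is_class r X -> is_class (restr r) (pimage X)) /\
  (forall X Y : {set 'S_m.+1}, is_class r X -> is_class r Y ->
     pimage X = pimage Y \/ [disjoint pimage X & pimage Y]).
Proof.
case=> rr rs rt rj rm.
have P1 : forall X : {set 'S_m.+1}, is_class r X -> is_class (restr r) (pimage X).
  move=> X [x ->]; have [s0 e0] := exists_p x.
  exists s0; apply/setP => s; rewrite (key_lemma rr rs rt rj rm e0).
  by rewrite /eq_class inE.
split => // X Y /P1 [a ->] /P1 [b ->].
case hab: (restr r a b).
- left; apply/setP => c; rewrite /eq_class !inE /restr; rewrite /restr in hab; apply/idP/idP => h.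
    by apply: (rt _ _ _ (rs _ _ hab) h).
  by apply: (rt _ _ _ hab h).
- right; rewrite -setI_eq0; apply/eqP/setP => c; rewrite /eq_class !inE; apply/negP => /andP[h1 h2].
  by move: hab; rewrite /restr (rt _ _ _ h1 (rs _ _ h2)).
Qed.
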